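(* Let $R$ be a commutative domain with unit, let $f\in R$ be nonzero and non-invertible, and let $S=R[u,v]/(uv-f)$. Then the following are equivalent: the image of $u$ is a prime element of $S$; the image of $v$ is a prime element of $S$; $f$ is a prime element of $R$.
   Context: A nonzero non-invertible element $r$ of a domain is prime if whenever $r$ divides a product $ab$, it divides $a$ or $b$. *)

(* Defs.v *)
From HB Require Import structures.
From mathcomp Require Import all_boot all_algebra ring_quotient.
From mathcomp Require Import boolp.

Set Implicit Arguments.
Unset Strict Implicit.
Unset Printing Implicit Defensive.

Import GRing.Theory.
Local Open Scope ring_scope.
Local Open Scope quotient_scope.

Definition dvd_elt (S : comNzRingType) (a b : S) : Prop := exists c, b = a * c.
Definition invertible_elt (S : comNzRingType) (a : S) : Prop := exists c, a * c = 1.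
Definition prime_elt (S : comNzRingType) (r : S) : Prop :=
  [/\ r != 0, ~ invertible_elt r &
      forall a b, dvd_elt r (a * b) -> dvd_elt r a \/ dvd_elt r b].

(* R[u,v] is modelled as {poly {poly R}}: u = 'X (outer variable),
   v = 'X%:P (inner variable, as a constant of the outer ring). *)
Section UVF.
Variables (R : idomainType) (f : R).

Definition var_u : {poly {poly R}} := 'X.
Definition var_v : {poly {poly R}} := ('X)%:P.

Definition uvf : {poly {poly R}} := var_u * var_v - (f%:P)%:P.

Definition uvf_ideal : {pred {poly {poly R}}} :=
  fun p => `[< exists q, p = q * uvf >].

Lemma size_uvf : size uvf = 2%N.
Proof.
rewrite /uvf /var_u /var_v mulrC -polyCN size_MXaddC.
by rewrite polyC_eq0 polyX_eq0 /= size_polyC polyX_eq0.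
Qed.

Lemma uvf_ideal_closed : idealr_closed uvf_ideal.
Proof.
split.
- by apply/asboolP; exists 0; rewrite mul0r.
- apply/negP => /asboolP [q Hq].
  have q0 : q != 0.
    by apply/eqP => q0; move: Hq; rewrite q0 mul0r => /eqP; rewrite oner_eq0.
  have u0 : uvf != 0 by rewrite -size_poly_eq0 size_uvf.
  have := congr1 (fun p : {poly {poly R}} => size p) Hq.
  rewrite size_poly1 size_mul // size_uvf addn2 /=.
  simpl; move=> /eqP; rewrite eq_sym eqSS.
  by apply/negP; rewrite size_poly_eq0.
- move=> a u v /asboolP [qu ->] /asboolP [qv ->].
  by apply/asboolP; exists (a * qu + qv); rewrite mulrDl mulrA.
Qed.

HB.instance Definition _ := isIdealr.Build _ uvf_ideal uvf_ideal_closed.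

Definition Suvf := {ideal_quot uvf_ideal}.

Definition u_S : Suvf := \pi_Suvf var_u.
Definition v_S : Suvf := \pi_Suvf var_v.

End UVF.

(* Main.v *)
Require Import Defs.
From HB Require Import structures.
From mathcomp Require Import all_boot all_algebra ring_quotient.
From mathcomp Require Import boolp ring.

Set Implicit Arguments.
Unset Strict Implicit.
Unset Printing Implicit Defensive.
Import GRing.Theory.
Local Open Scope ring_scope.
Local Open Scope quotient_scope.

Section S.
Variables (R : idomainType) (f : R).
Local Notation S := (Suvf f).
Local Notation PP := {poly {poly R}}.

Lemma piSE (p q : PP) : \pi_S p = \pi_S q <-> exists r, p - q = r * uvf f.
Proof.
split.
  move=> /eqP; rewrite -Quotient.idealrBE => /asboolP //.
move=> H; apply/eqP; rewrite -Quotient.idealrBE; exact/asboolP.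
Qed.

Lemma piSM (p q : PP) : \pi_S (p * q) = \pi_S p * \pi_S q.
Proof. by rewrite rmorphM. Qed.

Lemma piS1 : \pi_S (1 : PP) = 1.
Proof. by rewrite rmorph1. Qed.

Lemma uvf0 : (uvf f)`_0 = - f%:P.
Proof. by rewrite /uvf /var_u /var_v coefB mulrC coefMX !coefC /= sub0r. Qed.

Lemma dvd_u (p : PP) :
  dvd_elt (u_S f) (\pi_S p) <-> exists q : {poly R}, p`_0 = q * f%:P.
Proof.
split.
  move=> [c]; rewrite -[c]reprK /u_S -piSM => /piSE [r Hr].
  exists (- r`_0).
  have := congr1 (fun p : PP => p`_0) Hr => /=.
  rewrite coefB /var_u coef0M coefX /= mul0r subr0 => ->.
  by rewrite coef0M uvf0 mulrN mulNr.
move=> [q Hq].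
have : root (p - (p`_0)%:P) 0.
  by rewrite /root hornerD hornerN hornerC horner_coef0 subrr.
move=> /factor_theorem [p1 Hp1].
exists (\pi_S (p1 + var_v R * q%:P)).
rewrite /u_S -piSM; apply/piSE; exists (- q%:P).
rewrite polyC0 subr0 in Hp1.
have {1}-> : p = p1 * 'X + (p`_0)%:P by rewrite -Hp1 subrK.
rewrite Hq polyCM /uvf /var_u /var_v; ring.
Qed.

End S.

Section Gauss.
Variables (R : idomainType) (f : R) (fp : prime_elt f).

Definition fI : {pred R} := fun x => `[< dvd_elt f x >].

Lemma fI_closed : idealr_closed fI.
Proof.
case: fp => _ fnu fpr; split.
- by apply/asboolP; exists 0; rewrite mulr0.
- apply/negP => /asboolP [c Hc]; apply: fnu; by exists c.
- move=> a u v /asboolP [cu ->] /asboolP [cv ->]; apply/asboolP.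
  by exists (a * cu + cv); rewrite mulrDr mulrCA.
Qed.

Lemma fI_prime : prime_idealr_closed fI.
Proof.
case: fp => _ _ fpr u v /asboolP /fpr [H|H]; apply/orP; [left|right]; exact/asboolP.
Qed.

HB.instance Definition _ := isIdealr.Build R fI fI_closed.
HB.instance Definition _ := isPrimeIdealrClosed.Build R fI fI_prime.

Local Notation Q := {ideal_quot fI}.

Lemma piQ0 (x : R) : \pi_Q x = 0 -> dvd_elt f x.
Proof.
move=> H; have : \pi_Q x = \pi_Q 0 by rewrite H rmorph0.
move=> /eqP; rewrite -Quotient.idealrBE subr0 => /asboolP //.
Qed.

Lemma map0 (c : {poly R}) : map_poly \pi_Q c = 0 -> exists qc, c = qc * f%:P.
Proof.
move=> H.
have Hi : forall i, exists y, c`_i = f * y.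
  move=> i; apply: piQ0; by rewrite -coef_map H coef0.
have [g Hg] := choice Hi.
exists (\poly_(i < size c) g i); apply/polyP => i.
rewrite coefMC coef_poly; case: ltnP => Hi'.
  by rewrite Hg mulrC.
by rewrite mul0r nth_default.
Qed.

Lemma gauss (a b q : {poly R}) : a * b = q * f%:P ->
  (exists qa, a = qa * f%:P) \/ (exists qb, b = qb * f%:P).
Proof.
move=> H.
have Hf : \pi_Q f = 0.
  apply/eqP; rewrite -[0](rmorph0 \pi_Q) -Quotient.idealrBE subr0.
  by apply/asboolP; exists 1; rewrite mulr1.
have H0 : map_poly \pi_Q a * map_poly \pi_Q b = 0.
  by rewrite -rmorphM H rmorphM /= map_polyC /= Hf polyC0 mulr0.
have [Ha|Ha] := eqVneq (map_poly \pi_Q a) 0; first by left; apply: map0.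
have [Hb|Hb] := eqVneq (map_poly \pi_Q b) 0; first by right; apply: map0.
exfalso.
have : lead_coef (map_poly \pi_Q a) * lead_coef (map_poly \pi_Q b) != 0.
  apply/negP => /eqP /Quotient.rquot_IdomainAxiom /orP [];
  by rewrite lead_coef_eq0 ?(negPf Ha) ?(negPf Hb).
move=> /lead_coef_proper_mul; rewrite H0 lead_coef0 => E.
by move: (Quotient.rquot_IdomainAxiom (esym E)) => /orP []; rewrite lead_coef_eq0 ?(negPf Ha) ?(negPf Hb).
Qed.

End Gauss.

Section Main.
Variables (R : idomainType) (f : R).
Local Notation S := (Suvf f).
Local Notation PP := {poly {poly R}}.

Lemma swap_uvf : swapXY (uvf f) = uvf f.
Proof.
rewrite /uvf /var_u /var_v rmorphB rmorphM /= swapXY_X !swapXY_polyC map_polyC /=.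
by rewrite map_polyX mulrC.
Qed.

Lemma swM (p q : PP) : swapXY (p * q) = swapXY p * swapXY q.
Proof. exact: rmorphM. Qed.
Lemma sw1 : swapXY (1 : PP) = 1.
Proof. exact: rmorph1. Qed.
Lemma sw0 : swapXY (0 : PP) = 0.
Proof. exact: raddf0. Qed.
Lemma swK (p : PP) : swapXY (swapXY p) = p.
Proof. exact: swapXYK. Qed.

Lemma piS_swap (p q : PP) : \pi_S p = \pi_S q -> \pi_S (swapXY p) = \pi_S (swapXY q).
Proof.
move=> /piSE [r Hr]; apply/piSE; exists (swapXY r).
rewrite -rmorphB Hr rmorphM; congr (_ * _); exact: swap_uvf.
Qed.

Lemma prime_swap (pa : PP) : prime_elt (\pi_S pa) -> prime_elt (\pi_S (swapXY pa)).
Proof.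
case=> nz nu pr; split.
- apply: contra nz => /eqP H; apply/eqP.
  rewrite -(raddf0 (\pi_S)) in H.
  by have := piS_swap H; rewrite swK sw0 raddf0.
- move=> [c Hc]; apply: nu.
  rewrite -[c]reprK -piSM -piS1 in Hc.
  have := piS_swap Hc; rewrite swM sw1 swK piSM piS1 => ?.
  by exists (\pi_S (swapXY (repr c))).
- move=> x y [c Hc]; rewrite -[x]reprK -[y]reprK -[c]reprK -!piSM in Hc *.
  have := piS_swap Hc; rewrite !swM swK !piSM => Hd.
  have [[d Hd']|[d Hd']] := pr _ _ (ex_intro _ _ Hd); [left|right];
  exists (\pi_S (swapXY (repr d)));
  rewrite -[d]reprK -piSM in Hd'; have := piS_swap Hd';
  by rewrite swK swM piSM.
Qed.

Lemma u_nz (hf0 : f != 0) : u_S f != 0.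
Proof.
apply/eqP => H; rewrite /u_S -(raddf0 (\pi_S)) in H.
move: H => /piSE [r Hr].
have := congr1 (fun p : PP => (p.[f%:P]).[1]) Hr.
rewrite /= subr0 /uvf /var_u /var_v !(hornerM, hornerD, hornerN, hornerX, hornerC) mulr1 subrr mulr0.
by move=> /eqP; rewrite (negPf hf0).
Qed.

Lemma u_nu (hfu : f \isn't a GRing.unit) : ~ invertible_elt (u_S f).
Proof.
move=> [c Hc].
have : dvd_elt (u_S f) (\pi_S 1) by rewrite piS1; exists c.
move=> /dvd_u [q]; rewrite coef1 /= => Hq.
have := congr1 (fun p : {poly R} => p`_0) Hq; rewrite /= coef1 coefMC /= => H1.
move/negP: hfu; apply; apply/unitrPr; exists q`_0; by rewrite mulrC.
Qed.

End Main.

Theorem proposition1p6 (R : idomainType) (f : R)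
    (hf0 : f != 0) (hfu : f \isn't a GRing.unit) :
  [<-> prime_elt (u_S f); prime_elt (v_S f); prime_elt f].
Proof.
have u2f : prime_elt (u_S f) -> prime_elt f.
  case=> _ _ pr; split => //.
    move=> [c Hc]; move/negP: hfu; apply; apply/unitrPr; by exists c.
  move=> a b [c Hc].
  have : dvd_elt (u_S f) (\pi_(Suvf f) ((a%:P)%:P) * \pi_(Suvf f) ((b%:P)%:P)).
    rewrite -piSM; apply/dvd_u; exists c%:P.
    by rewrite -!polyCM coefC /= Hc mulrC.
  move=> /pr [] /dvd_u [q]; rewrite coefC /= => Hq;
  have := congr1 (fun p : {poly R} => p`_0) Hq; rewrite /= coefC coefMC /= => ->;
  [left|right]; by exists q`_0; rewrite mulrC.
have f2u : prime_elt f -> prime_elt (u_S f).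
  move=> fp; split; [exact: u_nz | exact: u_nu |].
  move=> x y; rewrite -[x]reprK -[y]reprK -piSM => /dvd_u [q].
  rewrite coef0M => /(gauss fp) [[qa Ha]|[qb Hb]]; [left|right]; apply/dvd_u.
    by exists qa.
  by exists qb.
have u2v : prime_elt (u_S f) -> prime_elt (v_S f).
  by move=> /prime_swap; rewrite swapXY_X.
have v2u : prime_elt (v_S f) -> prime_elt (u_S f).
  by move=> /prime_swap; rewrite /var_v swapXY_polyC map_polyX.
tfae; tauto.
Qed.
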